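(* Let $\Phi_t=(I-t\Psi)^{-1}$ be an inverse-linear path with $h_0$-self-adjoint $\Psi$, fix $X,Y\in\mathfrak g$, and set $A=[\Psi X,Y]+[X,\Psi Y]$, $B=[\Psi X,\Psi Y]$, $C=[\Psi X,Y]+[\Psi Y,X]$, $D=\Psi^2[X,Y]-\Psi A+B$. Then for every $t$ in the domain of $\kappa=\kappa^\Psi$, $$\kappa(t)=\alpha+\beta t+\gamma t^2+\delta t^3-\tfrac34 t^4\,|D|_{h_t}^2,$$ where $|D|_{h_t}^2=\langle\Phi_tD,D\rangle$ and $\alpha=\tfrac14|[X,Y]|^2$, $\beta=-\tfrac34\langle\Psi[X,Y],[X,Y]\rangle$, $\gamma=-\tfrac34|\Psi[X,Y]|^2+\tfrac32\langle\Psi[X,Y],A\rangle-\tfrac12\langle[X,Y],B\rangle-\tfrac14|A|^2+\tfrac14|C|^2-\langle[\Psi X,X],[\Psi Y,Y]\rangle$, $\delta=-\tfrac34\langle\Psi^3[X,Y],[X,Y]\rangle+\tfrac32\langle\Psi^2[X,Y],A\rangle-\tfrac32\langle\Psi[X,Y],B\rangle-\tfrac34\langle\Psi A,A\rangle-\tfrac14\langle\Psi C,C\rangle+\langle\Psi[\Psi X,X],[\Psi Y,Y]\rangle+\langle A,B\rangle$.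
   Context: $G$ is a compact Lie group with Lie algebra $\mathfrak g$ and bi-invariant metric $h_0$; $\langle Z_1,Z_2\rangle=h_0(Z_1,Z_2)$, $|Z|^2=\langle Z,Z\rangle$. A left-invariant metric $h$ corresponds to the $h_0$-self-adjoint positive definite $\Phi$ with $h(X,Y)=\langle\Phi X,Y\rangle$ on $\mathfrak g$. An inverse-linear path is $\Phi_t=(I-t\Psi)^{-1}$ with $\Psi$ $h_0$-self-adjoint; $h_t$ is the left-invariant metric with matrix $\Phi_t$, defined on the open interval of $t$ (containing $0$) where $I-t\Psi$ is positive definite; this interval is the domain of $\kappa$. The unnormalized sectional curvature is $k_h(Z_1,Z_2)=h(R_h(Z_1,Z_2)Z_2,Z_1)$, and $\kappa(t)=\kappa^\Psi(t)=k_{h_t}(\Phi_t^{-1}X,\Phi_t^{-1}Y)$. *)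

(* Defs.v *)
(* The Lie algebra g of G is modelled as R^n (column vectors),
   in an h0-orthonormal basis, so that h0 is the standard dot product. *)
From HB Require Import structures.
From mathcomp Require Import all_boot all_order all_algebra.
From mathcomp Require Import reals.
Set Implicit Arguments. Unset Strict Implicit. Unset Printing Implicit Defensive.
Import Order.TTheory GRing.Theory Num.Theory.
Local Open Scope ring_scope.

Section LieDefs.
Variables (R : realType) (n : nat).
Implicit Types (u v w x y z : 'cV[R]_n) (Phi Psi : 'M[R]_n).

Definition ip u v : R := (u^T *m v) ord0 ord0.

Definition is_lie_bracket (br : 'cV[R]_n -> 'cV[R]_n -> 'cV[R]_n) : Prop :=
  [/\ (forall (a : R) x y z, br (a *: x + y) z = a *: br x z + br y z),
      (forall (a : R) x y z, br z (a *: x + y) = a *: br z x + br z y),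
      (forall x y, br x y = - br y x) &
      (forall x y z, br x (br y z) + br y (br z x) + br z (br x y) = 0)].

Definition ad_invariant (br : 'cV[R]_n -> 'cV[R]_n -> 'cV[R]_n) : Prop :=
  forall x y z, ip (br x y) z = ip x (br y z).

Definition posdef Phi : Prop := forall v, v != 0 -> 0 < ip (Phi *m v) v.

Definition metric Phi u v : R := ip (Phi *m u) v.

Definition basis_vec (i : 'I_n) : 'cV[R]_n := delta_mx i ord0.

(* Koszul formula for left-invariant fields:
   2 h(nabla_X Y, Z) = h([X,Y],Z) - h([Y,Z],X) + h([Z,X],Y) *)
Definition koszul_vec br Phi x y : 'cV[R]_n :=
  \col_(i < n) (metric Phi (br x y) (basis_vec i)
                - metric Phi (br y (basis_vec i)) x
                + metric Phi (br (basis_vec i) x) y).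

Definition lc_conn br Phi x y : 'cV[R]_n :=
  (2 : R)^-1 *: (invmx Phi *m koszul_vec br Phi x y).

Definition curv br Phi x y z : 'cV[R]_n :=
  lc_conn br Phi x (lc_conn br Phi y z) - lc_conn br Phi y (lc_conn br Phi x z)
  - lc_conn br Phi (br x y) z.

Definition sec_curv br Phi z1 z2 : R := metric Phi (curv br Phi z1 z2 z2) z1.

Definition Phi_path Psi (t : R) : 'M[R]_n := invmx (1%:M - t *: Psi).

Definition in_domain Psi (t : R) : Prop := posdef (1%:M - t *: Psi).

Definition kappa br Psi x y (t : R) : R :=
  sec_curv br (Phi_path Psi t) (invmx (Phi_path Psi t) *m x)
                               (invmx (Phi_path Psi t) *m y).
End LieDefs.

(* Main.v *)
Require Import Defs.
From HB Require Import structures.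
From mathcomp Require Import all_boot all_order all_algebra.
From mathcomp Require Import reals ring lra.
Import Order.TTheory GRing.Theory Num.Theory.
Local Open Scope ring_scope.

Section IP.
Context {R : realType} {n : nat}.
Implicit Types (u v w : 'cV[R]_n) (M : 'M[R]_n).

Lemma ipC u v : ip u v = ip v u.
Proof.
rewrite /ip; have -> : v^T *m u = (u^T *m v)^T by rewrite trmx_mul trmxK.
by rewrite [in RHS]mxE.
Qed.
Lemma ipDl u v w : ip (u + v) w = ip u w + ip v w.
Proof. by rewrite /ip linearD /= mulmxDl mxE. Qed.
Lemma ipDr u v w : ip w (u + v) = ip w u + ip w v.
Proof. by rewrite /ip mulmxDr mxE. Qed.
Lemma ipZl (a : R) u w : ip (a *: u) w = a * ip u w.
Proof. by rewrite /ip linearZ /= -scalemxAl mxE. Qed.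
Lemma ipZr (a : R) u w : ip w (a *: u) = a * ip w u.
Proof. by rewrite /ip -scalemxAr mxE. Qed.
Lemma ipNl u w : ip (- u) w = - ip u w.
Proof. by rewrite -scaleN1r ipZl mulN1r. Qed.
Lemma ipNr u w : ip w (- u) = - ip w u.
Proof. by rewrite -scaleN1r ipZr mulN1r. Qed.
Lemma ipBl u v w : ip (u - v) w = ip u w - ip v w.
Proof. by rewrite ipDl ipNl. Qed.
Lemma ipBr u v w : ip w (u - v) = ip w u - ip w v.
Proof. by rewrite ipDr ipNr. Qed.
Lemma ip0l w : ip 0 w = 0.
Proof. by rewrite -(scale0r (0 : 'cV[R]_n)) ipZl mul0r. Qed.
Lemma ip0r w : ip w 0 = 0.
Proof. by rewrite ipC ip0l. Qed.
Lemma ipMl M u v : ip (M *m u) v = ip u (M^T *m v).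
Proof. by rewrite /ip trmx_mul mulmxA. Qed.
Lemma ipMsym M u v : M^T = M -> ip (M *m u) v = ip u (M *m v).
Proof. by move=> h; rewrite ipMl h. Qed.
Lemma ip_basis u (i : 'I_n) : ip (basis_vec R i) u = u i ord0.
Proof. by rewrite /ip /basis_vec trmx_delta -rowE mxE. Qed.
Lemma ip_basis_r u (i : 'I_n) : ip u (basis_vec R i) = u i ord0.
Proof. by rewrite ipC ip_basis. Qed.
End IP.

Section Lie.
Variables (R : realType) (n : nat) (br : 'cV[R]_n -> 'cV[R]_n -> 'cV[R]_n).
Hypothesis hlie : is_lie_bracket br.
Hypothesis had : ad_invariant br.
Implicit Types (a b c x y z : 'cV[R]_n).

Lemma brDZl (k : R) a b c : br (k *: a + b) c = k *: br a c + br b c.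
Proof. by case: hlie. Qed.
Lemma brDZr (k : R) a b c : br c (k *: a + b) = k *: br c a + br c b.
Proof. by case: hlie. Qed.
Lemma brA a b : br a b = - br b a.
Proof. by case: hlie. Qed.
Lemma brDl a b c : br (a + b) c = br a c + br b c.
Proof. by have := brDZl 1 a b c; rewrite !scale1r. Qed.
Lemma brDr a b c : br c (a + b) = br c a + br c b.
Proof. by have := brDZr 1 a b c; rewrite !scale1r. Qed.
Lemma br0l c : br 0 c = 0.
Proof.
have h := brDZl 1 0 0 c; rewrite scale1r addr0 scale1r in h.
by apply: (@addrI _ (br 0 c)); rewrite addr0 -h.
Qed.
Lemma br0r c : br c 0 = 0.
Proof. by rewrite brA br0l oppr0. Qed.
Lemma brZl (k : R) a c : br (k *: a) c = k *: br a c.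
Proof. by rewrite -[k *: a]addr0 brDZl br0l addr0. Qed.
Lemma brZr (k : R) a c : br c (k *: a) = k *: br c a.
Proof. by rewrite -[k *: a]addr0 brDZr br0r addr0. Qed.
Lemma brNl a c : br (- a) c = - br a c.
Proof. by rewrite -scaleN1r brZl scaleN1r. Qed.
Lemma brNr a c : br c (- a) = - br c a.
Proof. by rewrite -scaleN1r brZr scaleN1r. Qed.
Lemma brBl a b c : br (a - b) c = br a c - br b c.
Proof. by rewrite brDl brNl. Qed.
Lemma brBr a b c : br c (a - b) = br c a - br c b.
Proof. by rewrite brDr brNr. Qed.
Lemma brxx a : br a a = 0.
Proof.
have h : br a a + br a a = 0 by rewrite {1}brA addNr.
have : (2 : R) *: br a a = 0 by rewrite scaler_nat mulr2n.
by move/eqP; rewrite scaler_eq0 pnatr_eq0 /= => /eqP.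
Qed.
Lemma Tr a b c : ip (br a b) c = ip a (br b c).
Proof. exact: had. Qed.
Lemma Trot a b c : ip (br a b) c = ip (br b c) a.
Proof. by rewrite Tr ipC. Qed.
Lemma Tswap a b c : ip (br a b) c = - ip (br b a) c.
Proof. by rewrite brA ipNl. Qed.
Lemma Tself1 a b : ip (br a b) a = 0.
Proof.
have h : ip (br a b) a = - ip (br a b) a by rewrite {1}Trot Tswap.
lra.
Qed.
Lemma Tself2 a b : ip (br a b) b = 0.
Proof. by rewrite Tr brxx ip0r. Qed.

Lemma koszulE (Phi : 'M[R]_n) x y : Phi^T = Phi ->
  koszul_vec br Phi x y = Phi *m br x y + br y (Phi *m x) + br x (Phi *m y).
Proof.
move=> hs; apply/matrixP => i j; rewrite (ord1 j) !mxE /metric.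
rewrite ip_basis_r !ipMsym // Tswap Tr ip_basis Tr ip_basis !mxE.
by rewrite opprK.
Qed.

Lemma lcE (Phi : 'M[R]_n) x y : Phi^T = Phi -> Phi \in unitmx ->
  lc_conn br Phi x y = 2^-1 *: (br x y + invmx Phi *m (br y (Phi *m x) + br x (Phi *m y))).
Proof.
move=> hs hu; rewrite /lc_conn koszulE // -addrA mulmxDr mulKmx //.
Qed.

Lemma secE (Phi : 'M[R]_n) X Y : Phi^T = Phi -> Phi \in unitmx ->
  let S := invmx Phi in let x := S *m X in let y := S *m Y in
  let M := br y X + br x Y in
  sec_curv br Phi x y =
    - ip (br y Y) (S *m br x X) + 4^-1 * ip (S *m M) M
    - 3/4 * ip (Phi *m br x y) (br x y) + 2^-1 * ip (br x y) (br x Y - br y X).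
Proof.
move=> hs hu S x y M.
have hS : S^T = S by rewrite /S trmx_inv hs.
have Px : Phi *m x = X by rewrite /x /S mulKVmx.
have Py : Phi *m y = Y by rewrite /y /S mulKVmx.
have e1 : lc_conn br Phi y y = S *m br y Y.
  rewrite lcE // Py brxx add0r -/S mulmxDr scalerDr -scalerDl.
  have -> : (2^-1 + 2^-1 : R) = 1 by field.
  by rewrite scale1r.
rewrite /sec_curv /metric /curv e1 (lcE _ x y) // ?Px ?Py -/M.
set w2 := 2^-1 *: _.
rewrite !lcE // ?Px ?Py -/S.
have PS v : Phi *m (S *m v) = v by rewrite /S mulKVmx.
have SMl u v : ip (S *m u) v = ip u (S *m v) by rewrite ipMsym.
rewrite ipMsym // Px PS !(ipBl, ipDl, ipZl) !SMl -/x.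
set v := br y Y.
have T1 : ip (br x (S *m v)) X = - ip v (S *m br x X).
  by rewrite Tswap Tr SMl.
have T2a : ip (br (S *m v) X) x = - ip v (S *m br x X).
  by rewrite Tr SMl [br X x]brA mulmxN ipNr.
have T2b : ip (br x v) x = 0 by rewrite Tself1.
have T3 : ip (br y w2) X = - ip w2 (br y X) by rewrite Tswap Tr.
have T4a : ip (br w2 Y) x = - ip w2 (br x Y) by rewrite Tr [br Y x]brA ipNr.
have T4b : ip (br y (Phi *m w2)) x = ip (br x y) (Phi *m w2) by rewrite Trot Trot.
have T5 : ip (br (br x y) y) X = ip (br x y) (br y X) by rewrite Tr.
have T6a : ip (br y (Phi *m br x y)) x = ip (br x y) (Phi *m br x y) by rewrite Trot Trot.
have T6b : ip (br (br x y) Y) x = - ip (br x y) (br x Y) by rewrite Tr [br Y x]brA ipNr.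
rewrite !ipDl T1 T2a T2b T3 T4a T4b T5 T6a T6b.
rewrite /w2 -/S -!scalemxAr !(ipZl, ipZr, ipDl, ipDr, mulmxDr, ipBr, ipBl) PS.
rewrite ?SMl PS ipNr (ipMsym _ _ _ hs).
have hsym a b : ip a (S *m b) = ip b (S *m a) by rewrite -SMl ipC.
rewrite (hsym (br x Y) (br y X)).
lra.
Qed.
End Lie.

Lemma posdef_unit (R : realType) (n : nat) (M : 'M[R]_n) :
  M^T = M -> posdef M -> M \in unitmx.
Proof.
move=> hs hp; rewrite -row_free_unit -kermx_eq0; apply/negP => /negP.
case/rowV0Pn => v /sub_kermxP hv v0.
have hv' : M *m v^T = 0 by rewrite -[M]hs -trmx_mul hv linear0.
have : v^T != 0 by rewrite -(inj_eq (@trmx_inj _ _ _)) trmxK linear0.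
move/hp; rewrite hv' ip0l ltxx //.
Qed.

Theorem mainTheorem2 (R : realType) (n : nat)
    (br : 'cV[R]_n -> 'cV[R]_n -> 'cV[R]_n) (Psi : 'M[R]_n) (X Y : 'cV[R]_n) :
  is_lie_bracket br -> ad_invariant br -> Psi^T = Psi ->
  let XY := br X Y in
  let A := br (Psi *m X) Y + br X (Psi *m Y) in
  let B := br (Psi *m X) (Psi *m Y) in
  let C := br (Psi *m X) Y + br (Psi *m Y) X in
  let D := Psi *m (Psi *m XY) - Psi *m A + B in
  let alpha := 4^-1 * ip XY XY in
  let beta := - (3/4) * ip (Psi *m XY) XY in
  let gamma := - (3/4) * ip (Psi *m XY) (Psi *m XY) + (3/2) * ip (Psi *m XY) A
               - 2^-1 * ip XY B - 4^-1 * ip A A + 4^-1 * ip C C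
               - ip (br (Psi *m X) X) (br (Psi *m Y) Y) in
  let delta := - (3/4) * ip (Psi *m (Psi *m (Psi *m XY))) XY
               + (3/2) * ip (Psi *m (Psi *m XY)) A
               - (3/2) * ip (Psi *m XY) B - (3/4) * ip (Psi *m A) A
               - 4^-1 * ip (Psi *m C) C
               + ip (Psi *m br (Psi *m X) X) (br (Psi *m Y) Y) + ip A B in
  forall t : R, in_domain Psi t ->
    kappa br Psi X Y t =
      alpha + beta * t + gamma * t ^+ 2 + delta * t ^+ 3
      - (3/4) * t ^+ 4 * ip (Phi_path Psi t *m D) D.
Proof.
move=> hlie had hP XY A B C D alpha beta gamma delta t hdom.
set S0 := 1%:M - t *: Psi.
have hS0 : S0^T = S0 by rewrite /S0 linearB /= trmx1 linearZ /= hP.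
have uS0 : S0 \in unitmx by apply: posdef_unit.
set Phi := Phi_path Psi t.
have ePhi : Phi = invmx S0 by [].
have hPhi : Phi^T = Phi by rewrite ePhi trmx_inv hS0.
have uPhi : Phi \in unitmx by rewrite ePhi unitmx_inv.
have iPhi : invmx Phi = S0 by rewrite ePhi invmxK.
rewrite /kappa -/Phi.
have := @secE R n br hlie had Phi X Y hPhi uPhi; rewrite /= iPhi => ->.
have eS v : S0 *m v = v - t *: (Psi *m v) by rewrite /S0 mulmxBl mul1mx -scalemxAl.
have PS v : Phi *m (S0 *m v) = v by rewrite ePhi mulKmx.
have bBl := @brBl R n br hlie; have bBr := @brBr R n br hlie.
have bZl := @brZl R n br hlie; have bZr := @brZr R n br hlie.
have bxx := @brxx R n br hlie; have bA := @brA R n br hlie.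
set x := S0 *m X; set y := S0 *m Y.
have ex : br x X = - t *: br (Psi *m X) X.
  by rewrite /x eS bBl bZl bxx sub0r scaleNr.
have ey : br y Y = - t *: br (Psi *m Y) Y.
  by rewrite /y eS bBl bZl bxx sub0r scaleNr.
have eM : br y X + br x Y = - t *: C.
  rewrite /x /y !eS !bBl !bZl /C (bA Y X) scalerDr.
  apply/matrixP => i j; rewrite !mxE; ring.
have eN : br x Y - br y X = 2%:R *: XY - t *: A.
  rewrite /x /y !eS !bBl !bZl /A /XY (bA Y X) (bA (Psi *m Y) X) scalerDr.
  apply/matrixP => i j; rewrite !mxE; ring.
have exy2 : br x y = XY - t *: A + t^+2 *: B.
  rewrite /x /y !eS !(bBl, bBr, bZl, bZr) /A /XY /B scalerDr.
  apply/matrixP => i j; rewrite !mxE; ring.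
set P := XY + t *: (Psi *m XY) - t *: A.
have exy : br x y = S0 *m P + t^+2 *: D.
  rewrite exy2 eS /P /D !(mulmxDr, mulmxBr, scalerDr, scalerBr) -!scalemxAr.
  do 3 rewrite ?(mulmxDr, mulmxBr, mulmxN, scalerDr, scalerBr, scalerN, scalerA) -?scalemxAr.
  apply/matrixP => i j; rewrite !mxE; ring.
have e3a : Phi *m br x y = P + t^+2 *: (Phi *m D) by rewrite exy mulmxDr PS -scalemxAr.
have e3 : ip (Phi *m br x y) (br x y) = ip P (br x y) + t^+2 * (ip D P + t^+2 * ip (Phi *m D) D).
  by rewrite {1}e3a ipDl ipZl (ipMsym _ _ _ hPhi) e3a ipDr ipZr (ipMsym _ _ _ hPhi).
rewrite e3 eM eN ex ey exy2.
set Q := ip (Phi *m D) D.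
have eD : D = Psi *m (Psi *m XY) - Psi *m A + B by [].
rewrite /alpha /beta /gamma /delta /P.
clearbody Q; clearbody D; rewrite eD; clearbody XY A B C.
rewrite !eS.
do 4 rewrite ?(ipDl, ipDr, ipBl, ipBr, ipZl, ipZr, ipNl, ipNr, mulmxDr, mulmxBr, mulmxN) -?scalemxAr.
rewrite !(ipMsym _ _ _ hP).
have s1 u v : ip u (Psi *m v) = ip v (Psi *m u) by rewrite -(ipMsym _ _ _ hP) ipC.
have s2 u v : ip u (Psi *m (Psi *m v)) = ip v (Psi *m (Psi *m u)).
  by rewrite -(ipMsym _ _ _ hP) s1 ipC.
rewrite (ipC A XY) (ipC B XY) (ipC B A) (s1 A XY) (s2 A XY) (s1 B XY).
rewrite (ipC (br (Psi *m Y) Y)) (s1 (br (Psi *m Y) Y)).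
by field.
Qed.
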